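(* Let $N\ge2$ and $t>0$, and define, for $\boldsymbol{v}\in\mathbb{R}^N$ with pairwise distinct components, $$F_N(\boldsymbol{v},t)=\frac N2(N-1)(1-\log t)-\sum_{j=1}^Nj\log j+2\log|h_N(\boldsymbol{v})|-\frac{|\boldsymbol{v}|^2}{2t},\qquad h_N(\boldsymbol{v})=\prod_{1\le i<j\le N}(v_j-v_i).$$ Then the maximum value of $F_N(\cdot,t)$ is zero; in particular $F_N(\sqrt{2t}\,\rho\boldsymbol{z}_N,t)=0$ for every $\rho\in S_N$, where $\boldsymbol{z}_N$ is the vector of roots of the $N$-th Hermite polynomial $H_N(x)=(-1)^Ne^{x^2}\frac{d^N}{dx^N}e^{-x^2}$ and $\rho\boldsymbol{z}_N=(z_{\rho(1),N},\dots,z_{\rho(N),N})$. *)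

(* Defs.v *)
From HB Require Import structures.
From mathcomp Require Import all_boot all_order all_algebra all_fingroup.
From mathcomp Require Import all_classical all_reals all_analysis.
Set Implicit Arguments. Unset Strict Implicit. Unset Printing Implicit Defensive.
Import Order.TTheory GRing.Theory Num.Theory.
Local Open Scope ring_scope.

Definition hermite {R : realType} (N : nat) (x : R) : R :=
  (-1) ^+ N * expR (x ^+ 2) * derive1n N (fun y : R => expR (- y ^+ 2)) x.

Definition hN {R : realType} (N : nat) (v : 'I_N -> R) : R :=
  \prod_(i < N) \prod_(j < N | (i < j)%N) (v j - v i).

Definition sqnorm {R : realType} (N : nat) (v : 'I_N -> R) : R :=
  \sum_(i < N) v i ^+ 2.

Definition FN {R : realType} (N : nat) (v : 'I_N -> R) (t : R) : R :=
  N%:R / 2 * (N%:R - 1) * (1 - ln t)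
  - \sum_(1 <= j < N.+1) j%:R * ln (j%:R : R)
  + 2 * ln `|hN v|
  - sqnorm v / (2 * t).

(* Main.v *)
Require Import Defs.
From HB Require Import structures.
From mathcomp Require Import all_boot all_order all_algebra all_fingroup.
From mathcomp Require Import all_classical all_reals all_analysis.
From mathcomp Require Import polyrcf ring lra.
Import Order.TTheory GRing.Theory Num.Theory.
Local Open Scope ring_scope.
Set Implicit Arguments.

Section Herm.
Variable R : realType.

Fixpoint hp (n : nat) : {poly R} :=
  if n is m.+1 then 2 *: (hp m * 'X) - (hp m)^`() else 1.

Lemma is_derive_horner (p : {poly R}) (x : R) :
  is_derive x 1 (horner p) p^`().[x].
Proof. exact: is_derive_poly. Qed.

Lemma is_derive_gauss (p : {poly R}) (x : R) :
  is_derive x 1 (fun y => p.[y] * expR (- y ^+ 2))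
    ((p^`().[x] - 2 * x * p.[x]) * expR (- x ^+ 2)).
Proof.
have hg : is_derive x 1 (fun y => expR (- y ^+ 2)) (expR (- x ^+ 2) * (- 2 * x)).
  have h1 := is_derive_horner (- 'X ^+ 2) x.
  have e : (fun y : R => expR (- y ^+ 2)) = expR \o horner (- 'X ^+ 2).
    by apply/funext => y /=; rewrite hornerN hornerXn.
  rewrite e.
  have := is_derive1_comp (is_derive_expR ((- 'X ^+ 2 : {poly R}).[x])) h1.
  rewrite hornerN hornerXn derivN derivXn hornerN hornerMn hornerX /=.
  move=> h; apply: is_derive_eq h _; rewrite -mulr_natl; ring.
have := is_deriveM (is_derive_horner p x) hg.
have -> : (horner p * (fun y => expR (- y ^+ 2)) = fun y => p.[y] * expR (- y ^+ 2)).
  by apply/funext.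
move=> h; apply: trigger_derive h _.
rewrite /GRing.scale /=. ring.
Qed.
End Herm.
Section Herm2.
Variable R : realType.
Lemma derive1_gauss (p : {poly R}) :
  (fun y => p.[y] * expR (- y ^+ 2))^`()%classic =
  (fun x => (p^`() - 2%:P * 'X * p).[x] * expR (- x ^+ 2)).
Proof.
apply/funext => x; rewrite derive1E.
have h := is_derive_gauss p x; rewrite derive_val.
by rewrite hornerD hornerN !hornerM hornerC hornerX.
Qed.

Lemma rodrigues n :
  derive1n n (fun y : R => expR (- y ^+ 2)) =
  (fun x => ((-1) ^+ n *: hp R n).[x] * expR (- x ^+ 2)).
Proof.
elim: n => [|n IH].
  by rewrite derive1n0; apply/funext => x /=; rewrite expr0 scale1r hornerC mul1r.
rewrite derive1nS IH derive1_gauss; apply/funext => x; congr (_ * _).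
rewrite /= !derivZ !(hornerD, hornerN, hornerZ, hornerM, hornerC, hornerX, hornerMX) exprS; ring.
Qed.

Lemma hermiteE n (x : R) : hermite n x = (hp R n).[x].
Proof.
rewrite /hermite rodrigues hornerZ.
have -> : forall a E h E' : R, a * E * (a * h * E') = (a*a) * (E*E') * h.
  by move=> *; ring.
by rewrite -exprMn mulrNN mulr1 expr1n -expRD addrN expR0 !mul1r.
Qed.
End Herm2.
Section HermPoly.
Variable R : realType.
Local Notation hp := (hp R).

Lemma hpS n : hp n.+1 = 2 *: (hp n * 'X) - (hp n)^`().
Proof. by []. Qed.

Lemma deriv_hpS n : (hp n.+1)^`() = (2 * n.+1)%:R *: hp n.
Proof.
elim: n => [|n IH].
  rewrite hpS /= derivB derivZ mul1r derivX -polyC1 derivC deriv0 subr0.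
  by rewrite -!mul_polyC mulr1.
rewrite hpS derivB derivZ derivM derivX IH !derivZ hpS.
rewrite (mulnSr 2 n.+1) natrD -!mul_polyC polyCD.
ring.
Qed.

Lemma hpSS n : hp n.+2 = 2 *: (hp n.+1 * 'X) - (2 * n.+1)%:R *: hp n.
Proof. by rewrite hpS deriv_hpS. Qed.

Lemma hp_ode n : (hp n)^`()^`() = 2 *: ((hp n)^`() * 'X) - (2 * n)%:R *: hp n.
Proof.
case: n => [|n].
  by rewrite /= -polyC1 derivC deriv0 mul0r scaler0 muln0 scale0r subr0.
rewrite deriv_hpS derivZ hpS.
rewrite -!mul_polyC (natrM _ 2 n.+1) polyCM.
ring.
Qed.

Lemma size_lead_hp n : size (hp n) = n.+1 /\ lead_coef (hp n) = 2 ^+ n.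
Proof.
elim: n => [|n [IHs IHl]].
  by rewrite /= size_poly1 lead_coef1.
have hn0 : hp n != 0 by rewrite -size_poly_eq0 IHs.
have h2 : (2 : R) != 0 by rewrite pnatr_eq0.
have sX : size (2 *: (hp n * 'X)) = n.+2 by rewrite size_scale // size_mulX // IHs.
have sd : (size (- (hp n)^`()) < size (2 *: (hp n * 'X)))%N.
  by rewrite size_polyN sX -IHs ltnS ltnW // lt_size_deriv.
rewrite hpS; split; first by rewrite size_polyDl.
by rewrite lead_coefDl // lead_coefZ lead_coefMX IHl exprS.
Qed.

End HermPoly.

Section Factor.
Variable R : realType.

Lemma factor_roots n (p : {poly R}) (r : 'I_n -> R) :
  size p = n.+1 -> injective r -> (forall i, p.[r i] = 0) ->
  p = lead_coef p *: \prod_(i < n) ('X - (r i)%:P).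
Proof.
move=> sp ir hr.
have := @all_roots_prod_XsubC _ p [seq r i | i in 'I_n].
rewrite big_image; apply.
- by rewrite size_map size_enum_ord.
- by apply/allP => x /mapP [i _ ->]; rewrite /root hr.
- by rewrite uniq_rootsE map_inj_uniq // enum_uniq.
Qed.

Lemma horner_factor n (c : R) (r : 'I_n -> R) x :
  (c *: \prod_(i < n) ('X - (r i)%:P)).[x] = c * \prod_(i < n) (x - r i).
Proof.
by rewrite hornerZ horner_prod; congr (_ * _); apply: eq_bigr => i _; rewrite hornerXsubC.
Qed.

Lemma deriv_prod_XsubC (I : Type) (s : seq I) (P : pred I) (c : I -> R) x :
  (forall i, P i -> x != c i) ->
  (\prod_(i <- s | P i) ('X - (c i)%:P))^`().[x] =
  (\prod_(i <- s | P i) (x - c i)) * \sum_(i <- s | P i) (x - c i)^-1.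
Proof.
move=> hc; elim: s => [|a s IH].
  by rewrite !big_nil -polyC1 derivC horner0 mulr0.
rewrite !big_cons; case: ifP => Pa //.
rewrite derivM hornerD !hornerM IH hornerXsubC horner_prod.
rewrite derivXsubC hornerC mul1r.
have ha : x - c a != 0 by rewrite subr_eq0 hc.
under eq_bigr => i _ do rewrite hornerXsubC.
set Q := \prod_(i <- s | P i) (x - c i).
set S := \sum_(i <- s | P i) (x - c i)^-1.
by field.
Qed.

Lemma root_derivs n (L : R) (r : 'I_n -> R) k : injective r ->
  (L *: \prod_(i < n) ('X - (r i)%:P))^`().[r k] = L * \prod_(i | i != k) (r k - r i) /\
  (L *: \prod_(i < n) ('X - (r i)%:P))^`()^`().[r k] =
    2 * L * (\prod_(i | i != k) (r k - r i) * \sum_(i | i != k) (r k - r i)^-1).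
Proof.
move=> ir; rewrite (bigD1 k) //=.
set Q := \prod_(i | i != k) ('X - (r i)%:P).
have hQ : Q.[r k] = \prod_(i | i != k) (r k - r i).
  by rewrite horner_prod; apply: eq_bigr => i _; rewrite hornerXsubC.
have hQ' : Q^`().[r k] = \prod_(i | i != k) (r k - r i) * \sum_(i | i != k) (r k - r i)^-1.
  rewrite deriv_prod_XsubC //= => i ik.
  by apply: contra ik => /eqP /ir ->.
rewrite !derivZ !derivM !derivXsubC !mul1r !derivD !derivM !derivXsubC !mul1r.
rewrite !hornerZ !hornerD !hornerM !hornerXsubC subrr !mul0r !addr0.
split; first by rewrite hQ.
rewrite hQ'; ring.
Qed.
End Factor.
Section Stieltjes.
Variable R : realType.

Definition incr n (z : 'I_n -> R) := forall i j : 'I_n, (i < j)%N -> z i < z j.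
Arguments incr {n}.

Lemma incr_inj n (z : 'I_n -> R) : incr z -> injective z.
Proof.
move=> hz i j e; case: (ltngtP i j) => h; last exact: val_inj.
  by have := hz _ _ h; rewrite e ltxx.
by have := hz _ _ h; rewrite e ltxx.
Qed.

Lemma hp_factor n (z : 'I_n -> R) : incr z -> (forall i, (hp R n).[z i] = 0) ->
  hp R n = 2 ^+ n *: \prod_(i < n) ('X - (z i)%:P).
Proof.
move=> hz hr; have [s l] := size_lead_hp R n.
by rewrite {1}(factor_roots _ s (incr_inj hz) hr) l.
Qed.

Lemma prod_ne0 n (z : 'I_n -> R) k : injective z ->
  \prod_(i | i != k) (z k - z i) != 0.
Proof.
move=> iz; rewrite prodf_seq_neq0; apply/allP => i _; apply/implyP => ik.
by rewrite subr_eq0; apply: contra ik => /eqP /iz ->.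
Qed.

Lemma stieltjes n (z : 'I_n -> R) : incr z -> (forall i, (hp R n).[z i] = 0) ->
  forall k, \sum_(i | i != k) (z k - z i)^-1 = z k.
Proof.
move=> hz hr k.
have iz := incr_inj hz.
have [d1 d2] := root_derivs R (2 ^+ n) k iz.
rewrite -hp_factor // in d1 d2.
have := hp_ode R n; move/(congr1 (fun p => p.[z k])).
rewrite d2 hornerD hornerN !hornerZ hornerMX hr d1 mulr0 subr0.
set P := \prod_(i | i != k) _.
have hP : P != 0 by exact: prod_ne0.
have h2 : (2 : R) ^+ n != 0 by rewrite expf_neq0 // pnatr_eq0.
move=> e.
have : (2 * 2 ^+ n * P) * (\sum_(i | i != k) (z k - z i)^-1 - z k) = 0.
  rewrite mulrBr. have -> : forall a b c d : R, a * b * c * d = a * b * (c * d) by move=> *; ring.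
  rewrite e; ring.
move/eqP; rewrite !mulf_eq0 pnatr_eq0 /= (negbTE h2) (negbTE hP) /= subr_eq0.
by move/eqP.
Qed.
End Stieltjes.
Arguments incr {R n}.
Section Lower.
Variable R : realType.

Lemma incr_le n (z : 'I_n -> R) (i j : 'I_n) : incr z -> (i <= j)%N -> z i <= z j.
Proof.
move=> hz; rewrite leq_eqVlt => /orP [/eqP e|h]; last exact/ltW/hz.
by rewrite (val_inj e).
Qed.

Lemma lower_roots n (r : 'I_n.+1 -> R) : incr r -> (forall i, (hp R n.+1).[r i] = 0) ->
  {y : 'I_n -> R | incr y /\ forall i, (hp R n).[y i] = 0}.
Proof.
move=> hz hr.
have H : forall i : 'I_n, {c | c \in `]r (widen_ord (leqnSn n) i), r (lift ord0 i)[
                               & (hp R n).[c] = 0}.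
  move=> i.
  have lt : r (widen_ord (leqnSn n) i) < r (lift ord0 i) by apply: hz; rewrite /= /bump /=.
  have [c hc hd] := poly_rolle lt (etrans (hr _) (esym (hr _))).
  exists c => //; move: hd; rewrite deriv_hpS hornerZ => /eqP; rewrite mulf_eq0 pnatr_eq0 /=.
  by move/eqP.
exists (fun i => sval (H i)); split; last by move=> i; case: (H i).
move=> i j ij; case: (H i) => ci /=; rewrite in_itv /= => /andP [_ hi] _.
case: (H j) => cj /=; rewrite in_itv /= => /andP [hj _] _.
apply: (lt_le_trans hi); apply: (le_trans _ (ltW hj)).
by apply: incr_le.
Qed.
End Lower.
Section ProdPrev.
Variable R : realType.

Lemma prod_cmul m (c : R) (F : 'I_m -> R) :
  \prod_(i < m) (c * F i) = c ^+ m * \prod_(i < m) F i.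
Proof. by rewrite big_split prodr_const card_ord. Qed.

Lemma prod_prev n (r : 'I_n.+1 -> R) : incr r -> (forall i, (hp R n.+1).[r i] = 0) ->
  \prod_i `|(hp R n).[r i]| = \prod_(k < n.+1) ((2 * k)%:R : R) ^+ k.
Proof.
elim: n r => [|n IH] r hr hroot.
  by rewrite big_ord1 big_ord1 /= hornerC normr1 expr0.
have [y [hy hyr]] := lower_roots hr hroot.
have F1 := hp_factor hy hyr.
have F2 := hp_factor hr hroot.
have step1 : \prod_i `|(hp R n.+1).[r i]| = \prod_k `|(hp R n.+2).[y k]|.
  rewrite {1}F1 F2.
  under eq_bigr => i _ do rewrite horner_factor normrM normr_prod.
  under [RHS]eq_bigr => i _ do rewrite horner_factor normrM normr_prod.
  rewrite !prod_cmul exchange_big /=.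
  rewrite !normrX normr_nat -!exprM mulnC; congr (_ * _).
  by apply: eq_bigr => k _; apply: eq_bigr => i _; rewrite distrC.
rewrite step1.
under eq_bigr => k _ do rewrite hpSS hornerD hornerN !hornerZ hornerMX hyr mul0r mulr0 sub0r normrN normrM normr_nat.
rewrite prod_cmul IH // [RHS]big_ord_recr /=.
by rewrite mulrC.
Qed.
End ProdPrev.
Section Disc.
Variable R : realType.

Definition habs n (v : 'I_n -> R) := \prod_i \prod_(j | j != i) `|v i - v j|.

Lemma disc n (z : 'I_n.+1 -> R) : incr z -> (forall i, (hp R n.+1).[z i] = 0) ->
  habs z * 2 ^+ (n.+1 * n.+1) = \prod_(k < n.+2) ((2 * k)%:R : R) ^+ k.
Proof.
move=> hz hr.
have iz := incr_inj hz.
have e : forall k, 2 ^+ n.+1 * \prod_(j | j != k) `|z k - z j| = `|(hp R n.+1)^`().[z k]|.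
  move=> k; have [d1 _] := root_derivs R (2 ^+ n.+1) k iz.
  by rewrite -hp_factor // in d1; rewrite d1 normrM normr_prod normrX normr_nat.
rewrite exprM mulrC /habs -prod_cmul.
under eq_bigr => k _ do rewrite e deriv_hpS hornerZ normrM normr_nat.
by rewrite prod_cmul prod_prev // [RHS]big_ord_recr /= mulrC.
Qed.
End Disc.
Arguments habs {R n}.
Section Misc.
Variable R : realType.

Lemma hN_habs N (v : 'I_N -> R) : `|hN v| ^+ 2 = habs v.
Proof.
rewrite /hN normr_prod expr2.
have -> : habs v = \prod_(i < N) ((\prod_(j < N | (j != i) && (i < j)%N) `|v i - v j|) *
    \prod_(j < N | (j != i) && ~~ (i < j)%N) `|v i - v j|).
  by apply: eq_bigr => i _; rewrite (bigID (fun j : 'I_N => (i < j)%N)).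
rewrite big_split /=; congr (_ * _).
  apply: eq_bigr => i _; rewrite normr_prod.
  apply: eq_big => j; last by move=> _; rewrite distrC.
  by case: eqVneq => [->|//]; rewrite ltnn.
rewrite (exchange_big_dep xpredT) //=.
apply: eq_bigr => i _; rewrite normr_prod.
apply: eq_bigl => j.
case: (ltngtP i j) => h /=; rewrite ?andbT ?andbF //.
  by apply/esym/eqP => e; move: h; rewrite e ltnn.
by rewrite (val_inj h) eqxx.
Qed.

Lemma ln_prod (I : finType) (P : pred I) (F : I -> R) :
  (forall i, P i -> 0 < F i) ->
  ln (\prod_(i | P i) F i) = \sum_(i | P i) ln (F i).
Proof.
move=> hF.
suff : 0 < \prod_(i | P i) F i /\ ln (\prod_(i | P i) F i) = \sum_(i | P i) ln (F i) by case.
elim/big_rec2: _ => [|i y1 y2 Pi [h1 h2]]; first by rewrite ln1.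
split; first by rewrite mulr_gt0 // hF.
by rewrite lnM // ?h2 // posrE ?hF.
Qed.

Lemma ln_le_sub1 (x : R) : 0 < x -> ln x <= x - 1.
Proof.
move=> hx; have := expR_ge1Dx (ln x); rewrite lnK ?posrE //.
by rewrite addrC -lerBrDr.
Qed.

Lemma big_perm_neq (op : SemiGroup.com_law R) (idx : R) N (rho : 'S_N) (G : 'I_N -> R) i :
  \big[op/idx]_(j | j != i) G (rho j) = \big[op/idx]_(j | j != rho i) G j.
Proof.
rewrite [RHS](reindex_inj (@perm_inj _ rho)); apply: eq_bigl => j.
by rewrite (inj_eq perm_inj).
Qed.

Lemma rel_sum N (u v : 'I_N -> R) :
  \sum_i \sum_(j | j != i) (v i - v j) / (u i - u j) =
  2 * \sum_i v i * \sum_(j | j != i) (u i - u j)^-1.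
Proof.
have e : forall i j, (v i - v j) / (u i - u j) = v i * (u i - u j)^-1 + v j * (u j - u i)^-1.
  by move=> i j; rewrite -(opprB (u i)) invrN; ring.
under eq_bigr => i _ do under eq_bigr => j _ do rewrite e.
under eq_bigr => i _ do rewrite big_split /= -mulr_sumr.
rewrite big_split /= mulr2n mulrDl mul1r; congr (_ + _).
rewrite (exchange_big_dep xpredT) //=.
apply: eq_bigr => j _; rewrite mulr_sumr; apply: eq_bigl => i.
by rewrite eq_sym.
Qed.
End Misc.
Arguments rel_sum {R N}.
Section Part2.
Variable R : realType.

Lemma habs_gt0 N (v : 'I_N -> R) : injective v -> 0 < habs v.
Proof.
move=> iv; apply: prodr_gt0 => i _; apply: prodr_gt0 => j ji.
by rewrite normr_gt0 subr_eq0; apply: contra ji => /eqP /iv ->.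
Qed.

Lemma sum_neq_const N (i : 'I_N) (x : R) : \sum_(j | j != i) x = x *+ N.-1.
Proof. by rewrite sumr_const cardC1 card_ord. Qed.

Lemma prod_neq_const N (i : 'I_N) (x : R) : \prod_(j | j != i) x = x ^+ N.-1.
Proof. by rewrite prodr_const cardC1 card_ord. Qed.

Lemma sum_nat_id m : (\sum_(k < m) (k%:R : R)) * 2 = m%:R * (m%:R - 1).
Proof.
elim: m => [|m IH]; first by rewrite big_ord0 mul0r mulr0n mul0r.
rewrite big_ord_recr /= mulrDl IH -natr1; ring.
Qed.

Lemma sumsq_roots n (z : 'I_n -> R) : incr z -> (forall i, (hp R n).[z i] = 0) ->
  (\sum_i z i ^+ 2) * 2 = n%:R * (n%:R - 1).
Proof.
move=> hz hr; have iz := incr_inj hz.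
have := rel_sum z z.
have -> : \sum_i \sum_(j | j != i) (z i - z j) / (z i - z j) = \sum_(i < n) (n.-1)%:R.
  apply: eq_bigr => i _; rewrite -(sum_neq_const i).
  apply: eq_bigr => j ji; rewrite divff // subr_eq0; apply: contra ji => /eqP /iz ->.
  by [].
have -> : \sum_i z i * \sum_(j | j != i) (z i - z j)^-1 = \sum_i z i ^+ 2.
  by apply: eq_bigr => i _; rewrite (stieltjes hz hr) expr2.
rewrite sumr_const card_ord mulrC => <-.
case: n {z hz hr iz} => [|n]; first by rewrite mulr0n mul0r.
by rewrite -mulr_natr /= -natr1; ring.
Qed.
End Part2.
Section Part2b.
Variable R : realType.

Lemma habs_perm N (s : R) (z : 'I_N -> R) (rho : 'S_N) :
  habs (fun i => s * z (rho i)) = `|s| ^+ (N * N.-1) * habs z.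
Proof.
rewrite /habs.
under eq_bigr => i _ do under eq_bigr => j _ do rewrite -mulrBr normrM.
under eq_bigr => i _ do rewrite big_split /= prod_neq_const.
rewrite prod_cmul -exprM mulnC; congr (_ * _).
rewrite [RHS](reindex_inj (@perm_inj _ rho)); apply: eq_bigr => i _.
exact: (@big_perm_neq R _ _ _ rho (fun j => `|z (rho i) - z j|) i).
Qed.

Lemma sqnorm_perm N (s : R) (z : 'I_N -> R) (rho : 'S_N) :
  sqnorm (fun i => s * z (rho i)) = s ^+ 2 * \sum_i z i ^+ 2.
Proof.
rewrite /sqnorm mulr_sumr [RHS](reindex_inj (@perm_inj _ rho)).
by apply: eq_bigr => i _; rewrite exprMn.
Qed.

Lemma ln_disc n (z : 'I_n.+1 -> R) : incr z -> (forall i, (hp R n.+1).[z i] = 0) ->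
  ln (habs z) + (n.+1 * n.+1)%:R * ln 2 =
  ln 2 * \sum_(k < n.+2) (k%:R : R) + \sum_(1 <= j < n.+2) j%:R * ln (j%:R : R).
Proof.
move=> hz hr; have := disc hz hr; move/(congr1 (@ln R)).
have h2 : (0 : R) < 2 by [].
rewrite lnM ?posrE ?habs_gt0 ?exprn_gt0 //; last exact: incr_inj.
rewrite lnXn // (mulr_natl (ln 2) (n.+1 * n.+1)) => ->.
rewrite ln_prod; last first.
  move=> [[|k] hk] _ /=; first by rewrite expr0.
  by apply: exprn_gt0; rewrite ltr0n muln_gt0.
have e : forall i : 'I_n.+2, ln ((2 * i)%:R ^+ i : R) = ln 2 * i%:R + i%:R * ln (i%:R : R).
  move=> [[|i] hi] /=; first by rewrite expr0 ln1 !mulr0 mul0r addr0.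
  rewrite lnXn ?ltr0n ?muln_gt0 // natrM lnM ?posrE ?ltr0n // -mulr_natr; ring.
under eq_bigr => i _ do rewrite e.
rewrite big_split /= -mulr_sumr; congr (_ + _).
rewrite -(big_mkord xpredT (fun j => j%:R * ln (j%:R : R))) big_ltn //.
by rewrite mul0r add0r.
Qed.
End Part2b.
Section Part2c.
Variable R : realType.

Lemma part2 N (t : R) (z : 'I_N -> R) : (2 <= N)%N -> 0 < t -> incr z ->
  (forall i, (hp R N).[z i] = 0) ->
  forall rho : 'S_N, FN (fun i => Num.sqrt (2 * t) * z (rho i)) t = 0.
Proof.
case: N z => [|n] z // hN2 ht hz hr rho.
set s := Num.sqrt (2 * t).
have t2 : 0 < 2 * t by rewrite mulr_gt0.
have hs : 0 < s by rewrite sqrtr_gt0.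
have hs2 : s ^+ 2 = 2 * t by rewrite sqr_sqrtr // ltW.
set u := fun i => s * z (rho i).
have iu : injective u.
  move=> i j /mulfI e; apply: (@perm_inj _ rho); apply: (incr_inj hz); apply: e.
  by rewrite gt_eqF.
have hu : habs u = s ^+ (n.+1 * n) * habs z by rewrite /u habs_perm gtr0_norm.
have hh : 2 * ln `|hN u| = ln (habs u).
  have hp0 : 0 < `|hN u|.
    rewrite lt_neqAle normr_ge0 andbT; apply/eqP => e.
    by have := @habs_gt0 R _ _ iu; rewrite -hN_habs -e expr0n ltxx.
  by rewrite -hN_habs lnXn // mulr_natl.
have lnhu : ln (habs u) = (n.+1 * n)%:R * ln s + ln (habs z).
  rewrite hu lnM ?posrE ?exprn_gt0 ?habs_gt0 //; last exact: incr_inj.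
  by rewrite lnXn // mulr_natl.
have lns : ln s = (ln 2 + ln t) / 2.
  have : ln (s ^+ 2) = ln (2 * t) by rewrite hs2.
  rewrite lnXn // lnM ?posrE // => <-.
  by rewrite mulr2n; field.
have ld := ln_disc hz hr.
have sq := sumsq_roots hz hr.
have sn : sqnorm u = s ^+ 2 * \sum_i z i ^+ 2 by apply: sqnorm_perm.
have T := sum_nat_id R n.+2.
rewrite /FN hh lnhu sn hs2.
move: ld sq T.
set S := \sum_(1 <= j < n.+2) _.
set Z := \sum_i z i ^+ 2.
set K := \sum_(k < n.+2) _.
set lh := ln (habs z).
rewrite lns => ld sq T.
have h2 : (2 : R) != 0 by rewrite pnatr_eq0.
have -> : lh = ln 2 * K + S - (n.+1 * n.+1)%:R * ln 2 by rewrite -ld addrK.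
have -> : Z = n.+1%:R * (n.+1%:R - 1) / 2 by rewrite -sq mulfK.
have -> : K = n.+2%:R * (n.+2%:R - 1) / 2 by rewrite -T mulfK.
rewrite !natrM -[n.+2%:R]natr1 -[n.+1%:R]natr1.
set m := (n%:R : R).
field.
by rewrite gt_eqF.
Qed.
End Part2c.
Section Part1.
Variable R : realType.

Lemma ln_hN N (w : 'I_N -> R) : injective w -> 2 * ln `|hN w| = ln (habs w).
Proof.
move=> iw.
have hp0 : 0 < `|hN w|.
  rewrite lt_neqAle normr_ge0 andbT; apply/eqP => e.
  by have := @habs_gt0 R _ _ iw; rewrite -hN_habs -e expr0n ltxx.
by rewrite -hN_habs lnXn // mulr_natl.
Qed.

Lemma part1 N (t : R) (z : 'I_N -> R) : (2 <= N)%N -> 0 < t -> incr z ->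
  (forall i, (hp R N).[z i] = 0) ->
  forall v : 'I_N -> R, injective v -> FN v t <= 0.
Proof.
move=> hN2 ht hz hr v iv.
have rk_lt : forall i, (#|[set j | (v j < v i)%R]| < N)%N.
  move=> i; rewrite -[N in (_ < N)%N]card_ord -cardsT; apply: proper_card.
  apply/properP; split; first by apply/fintype.subsetP => k _; rewrite inE.
  by exists i; rewrite ?inE ?ltxx.
pose rk := fun i => Ordinal (rk_lt i).
have rk_mono : forall i j, v i < v j -> (rk i < rk j)%N.
  move=> i j h; rewrite /=; apply: proper_card; apply/properP; split.
    by apply/fintype.subsetP => k; rewrite !inE => hk; exact: lt_trans hk h.
  by exists i; rewrite !inE ?h ?ltxx.
have rk_inj : injective rk.
  move=> i j e; case: (ltgtP (v i) (v j)) => h; last exact: iv.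
    by have := rk_mono _ _ h; rewrite e ltnn.
  by have := rk_mono _ _ h; rewrite e ltnn.
pose rho := perm rk_inj.
have F0 := @part2 R N t z hN2 ht hz hr rho.
set s := Num.sqrt (2 * t) in F0.
set u := fun i => s * z (rho i) in F0.
have t2 : 0 < 2 * t by rewrite mulr_gt0.
have hs : 0 < s by rewrite sqrtr_gt0.
have hs2 : s ^+ 2 = 2 * t by rewrite sqr_sqrtr // ltW.
have iu : injective u.
  move=> i j /mulfI e; apply: (@perm_inj _ rho); apply: (incr_inj hz); apply: e.
  by rewrite gt_eqF.
have uv : forall i j, v i < v j -> u i < u j.
  by move=> i j h; rewrite /u ltr_pM2l // !permE; apply: hz; apply: rk_mono.
have xpos : forall i j, j != i -> 0 < (v i - v j) / (u i - u j).
  move=> i j ji; case: (ltgtP (v i) (v j)) => h.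
  - rewrite -(opprB (v j)) -(opprB (u j)) invrN mulrNN divr_gt0 // subr_gt0 //.
    exact: uv.
  - by rewrite divr_gt0 // subr_gt0 //; exact: uv.
  - by move: ji; rewrite (iv _ _ h) eqxx.
have rel : forall i, \sum_(j | j != i) (u i - u j)^-1 = u i / (2 * t).
  move=> i; rewrite -hs2 /u.
  under eq_bigr => j _ do rewrite -mulrBr invfM.
  rewrite -mulr_sumr.
  rewrite (@big_perm_neq R _ _ _ rho (fun j => (z (rho i) - z j)^-1) i).
  rewrite (stieltjes hz hr); field; by rewrite gt_eqF.
have du : forall i j, j != i -> u i - u j != 0.
  by move=> i j ji; rewrite subr_eq0; apply: contra ji => /eqP /iu ->.
have hx : habs v = (\prod_i \prod_(j | j != i) ((v i - v j) / (u i - u j))) * habs u.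
  rewrite /habs -big_split /=; apply: eq_bigr => i _; rewrite -big_split /=.
  apply: eq_bigr => j ji.
  by rewrite -(gtr0_norm (xpos _ _ ji)) -normrM divfK // du.
have hP : 0 < \prod_i \prod_(j | j != i) ((v i - v j) / (u i - u j)).
  by apply: prodr_gt0 => i _; apply: prodr_gt0 => j ji; exact: xpos.
have A : ln (habs v) - ln (habs u) = \sum_i \sum_(j | j != i) ln ((v i - v j) / (u i - u j)).
  rewrite hx lnM ?posrE ?(@habs_gt0 R _ _ iu) // addrK ln_prod.
    by apply: eq_bigr => i _; rewrite ln_prod // => j ji; exact: xpos.
  by move=> i _; apply: prodr_gt0 => j ji; exact: xpos.
have B : \sum_i \sum_(j | j != i) ln ((v i - v j) / (u i - u j)) <=
         \sum_i \sum_(j | j != i) ((v i - u i) - (v j - u j)) / (u i - u j).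
  apply: ler_sum => i _; apply: ler_sum => j ji.
  apply: (le_trans (@ln_le_sub1 R _ (xpos _ _ ji))).
  rewrite le_eqVlt; apply/orP; left; apply/eqP.
  rewrite -{1}(divff (du _ _ ji)) -mulrBl; congr (_ * _); ring.
have C : \sum_i \sum_(j | j != i) ((v i - u i) - (v j - u j)) / (u i - u j) =
    2 * \sum_i (v i - u i) * (u i / (2 * t)).
  rewrite (rel_sum u (fun i => v i - u i)); congr (2 * _).
  by apply: eq_bigr => i _; rewrite rel.
set W := \sum_i (v i - u i) * u i.
have E : \sum_i (v i - u i) * (u i / (2 * t)) = W / (2 * t).
  by rewrite /W mulr_suml; apply: eq_bigr => i _; rewrite mulrA.
rewrite E in C.
have key : sqnorm v - sqnorm u - 2 * W = \sum_i (v i - u i) ^+ 2.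
  rewrite /sqnorm /W mulr_sumr -!sumrB; apply: eq_bigr => i _; ring.
have Q : 0 <= \sum_i (v i - u i) ^+ 2 by apply: sumr_ge0 => i _; exact: sqr_ge0.
have H3 : 2 * W / (2 * t) <= (sqnorm v - sqnorm u) / (2 * t).
  rewrite ler_pM2r ?invr_gt0 //; rewrite -subr_ge0 key //.
rewrite -F0 /FN (ln_hN iv) (ln_hN iu).
move: A B C H3; rewrite mulrBl -mulrA.
set a := ln (habs v); set b := ln (habs u).
set X := sqnorm v / (2 * t); set Y := sqnorm u / (2 * t); set Z := W / (2 * t).
set S1 := \sum_i \sum_(j | j != i) ln _.
set S2 := \sum_i \sum_(j | j != i) _.
move=> A B C H3.
lra.
Qed.
End Part1.

Unset Implicit Arguments.

Theorem lemma2 (R : realType) (N : nat) (t : R) (z : 'I_N -> R) :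
  (2 <= N)%N -> 0 < t ->
  (* z is the vector of the N (distinct, increasingly ordered) roots of H_N *)
  (forall i j : 'I_N, (i < j)%N -> z i < z j) ->
  (forall i : 'I_N, hermite N (z i) = 0) ->
  (forall v : 'I_N -> R, injective v -> FN v t <= 0) /\
  (forall rho : 'S_N, FN (fun i => Num.sqrt (2 * t) * z (rho i)) t = 0).
Proof.
move=> hN2 ht hz hr.
have hr' : forall i, (hp R N).[z i] = 0 by move=> i; rewrite -hermiteE.
split.
  exact: (@part1 R N t z hN2 ht hz hr').
exact: (@part2 R N t z hN2 ht hz hr').
Qed.
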